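(* There is an absolute constant $\beta>0$ such that the following holds. Let $X\subset\mathbb{R}^d$ be a finite data set with $|X|=n$, let $\varepsilon\in(0,1)$, and let $C=\{c_1,\dots,c_m\}\subset\mathbb{R}^d$ be a finite nonempty set of projection centers. For each $i$, let $N_i$ be an $\varepsilon$-net of the unit sphere centered at $c_i$, and for $u\in N_i$ let $l_{iu}$ be the line through $c_i$ and $u$; let $\mathcal{L}:=\{l_{iu}: i\in\{1,\dots,m\},u\in N_i\}$. Let $X'$ be the multiset obtained by replacing each $x\in X$ by its orthogonal projection onto a nearest line of $\mathcal{L}$. Then for every finite nonempty $C'\subset\mathbb{R}^d$ and every $p\in\{1,\dots,n\}$, $$|\mathrm{cost}_p(X', C') - \mathrm{cost}_p(X, C')| \leq \beta\,\varepsilon \cdot \mathrm{cost}_p(X, C).$$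
   Context: Distances are Euclidean and $d(x,C):=\min_{c\in C}d(x,c)$. For a finite multiset $Y$ and finite nonempty $C$, $\mathrm{cost}_p(Y,C)$ is the sum of the $p$ largest values of $d(y,C)$, $y\in Y$, counted with multiplicity. *)

(* Defs.v *)
From mathcomp Require Import all_boot all_order all_algebra.
From mathcomp Require Import Rstruct.
Set Implicit Arguments. Unset Strict Implicit. Unset Printing Implicit Defensive.
Import Order.TTheory GRing.Theory Num.Theory.
Local Open Scope ring_scope.

Notation pt d := 'rV[Rdefinitions.R]_d.

Definition dotp d (u v : pt d) : Rdefinitions.R := \sum_(i < d) u 0 i * v 0 i.
Definition enorm d (v : pt d) : Rdefinitions.R := Num.sqrt (dotp v v).
Definition edist d (x y : pt d) : Rdefinitions.R := enorm (x - y).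

Definition distC d (C : seq (pt d)) (x : pt d) : Rdefinitions.R :=
  \big[Num.min/ (if C is c :: _ then edist x c else 0)]_(c <- C) edist x c.

Definition costp d (p : nat) (Y : seq (pt d)) (C : seq (pt d)) : Rdefinitions.R :=
  \sum_(i < p) nth 0 (sort (fun a b : Rdefinitions.R => b <= a) (map (distC C) Y)) i.

Definition is_eps_net d (c : pt d) (eps : Rdefinitions.R) (N : seq (pt d)) : Prop :=
  (forall u, u \in N -> edist u c = 1) /\
  (forall y, edist y c = 1 -> exists2 u, u \in N & edist y u <= eps).

(* a line l_{cu} through c and u (|u - c| = 1) is represented by the pair (c, u) *)
Definition lines d (C : seq (pt d)) (N : pt d -> seq (pt d)) : seq (pt d * pt d) :=
  [seq (c, u) | c <- C, u <- N c].

(* orthogonal projection of x onto the line through c and u, |u - c| = 1 *)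
Definition proj_line d (l : pt d * pt d) (x : pt d) : pt d :=
  l.1 + dotp (x - l.1) (l.2 - l.1) *: (l.2 - l.1).

Definition dist_line d (l : pt d * pt d) (x : pt d) : Rdefinitions.R :=
  edist x (proj_line l x).

(* Main.v *)
Require Import Defs.
From mathcomp Require Import all_boot all_order all_algebra.
From mathcomp Require Import Rstruct lra ring.
Import Order.TTheory GRing.Theory Num.Theory.
Local Open Scope ring_scope.
Notation R := Rdefinitions.R.
Definition geR := (fun a b : R => b <= a).

Lemma geR_tr : transitive geR. Proof. by move=> a b c /= h1 h2; apply: le_trans h2 h1. Qed.
Lemma geR_refl : reflexive geR. Proof. by move=> a; rewrite /geR. Qed.
Lemma geR_total : total geR. Proof. by move=> a b; rewrite /geR orbC le_total. Qed.

Lemma cardP_lt n p : (p <= n)%N -> #|[set i : 'I_n | (i < p)%N]| = p.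
Proof.
move=> pn; rewrite -sum1_card.
rewrite (eq_bigl (fun i : 'I_n => (i < p)%N)); last by move=> i; rewrite inE.
by rewrite -(big_ord_widen n (fun _ => 1%N) pn) sum1_card card_ord.
Qed.

Lemma top_sorted (n p : nat) (s : seq R) (K : {set 'I_n}) :
  sorted geR s -> size s = n -> #|K| = p ->
  \sum_(i in K) s`_i <= \sum_(i < p) s`_i.
Proof.
move=> Hs Hn HK.
have pn : (p <= n)%N by rewrite -HK; apply: leq_trans (max_card _) _; rewrite card_ord.
rewrite (big_ord_widen n (fun i => s`_i) pn).
set P := [set i : 'I_n | (i < p)%N].
have -> : \sum_(i < n | (i < p)%N) s`_i = \sum_(i in P) s`_i.
  by apply: eq_bigl => i; rewrite inE.
rewrite [X in X <= _](big_setID P) [X in _ <= X](big_setID K) /= setIC lerD2l.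
set t := s`_(p.-1).
have srt := sorted_leq_nth geR_tr geR_refl 0 Hs.
have h1 : \sum_(i in K :\: P) s`_i <= \sum_(i in K :\: P) t.
  apply: ler_sum => i; rewrite !inE -leqNgt => /andP[pi _].
  have ip : (p.-1 <= i)%N by apply: leq_trans (leq_pred p) pi.
  apply: (srt p.-1 i) => //; rewrite inE Hn //.
  by apply: leq_ltn_trans ip _.
have h2 : \sum_(i in P :\: K) t <= \sum_(i in P :\: K) s`_i.
  apply: ler_sum => i; rewrite !inE => /andP[_ ip].
  apply: (srt i p.-1) => //; rewrite ?inE ?Hn //.
    by case: p ip pn {HK P h1 t srt} => // p' _ /=.
  by case: p ip {HK P h1 t srt pn} => // p'.
have hc : #|K :\: P| = #|P :\: K|.
  have e1 := cardsID P K; have e2 := cardsID K P.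
  rewrite HK in e1; rewrite cardP_lt // setIC in e2.
  by apply/eqP; rewrite -(eqn_add2l #|K :&: P|) e1 e2.
apply: le_trans h1 _; apply: le_trans _ h2.
by rewrite !sumr_const hc.
Qed.
Lemma perm_idx n (Is : seq nat) : perm_eq Is (iota 0 n.+1) ->
  (forall i : 'I_n.+1, nat_of_ord (inord (nth 0%N Is i) : 'I_n.+1) = nth 0%N Is i) /\
  injective (fun i : 'I_n.+1 => (inord (nth 0%N Is i) : 'I_n.+1)).
Proof.
move=> hp.
have hs : size Is = n.+1 by rewrite (perm_size hp) size_iota.
have hu : uniq Is by rewrite (perm_uniq hp) iota_uniq.
have hlt : forall i : 'I_n.+1, (nth 0%N Is i < n.+1)%N.
  move=> i; have : nth 0%N Is i \in Is by rewrite mem_nth // hs.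
  by rewrite (perm_mem hp) mem_iota.
have e : forall i : 'I_n.+1, nat_of_ord (inord (nth 0%N Is i) : 'I_n.+1) = nth 0%N Is i.
  by move=> i; rewrite inordK.
split=> // i j /(congr1 (@nat_of_ord _)); rewrite !e => /eqP.
by rewrite nth_uniq ?hs // => /eqP /val_inj.
Qed.

Lemma top_ge (n p : nat) (l : seq R) (K : {set 'I_n}) :
  size l = n -> #|K| = p ->
  \sum_(i in K) l`_i <= \sum_(i < p) (sort geR l)`_i.
Proof.
move=> Hn HK.
have hp : perm_eq l (sort geR l) by rewrite perm_sym perm_sort.
have hss : size (sort geR l) = n by rewrite size_sort.
case/(perm_iotaP 0): hp => Is hIs hl.
case: n Hn K HK hss hIs => [|n] Hn K HK hss hIs.
  have : (p <= 0)%N by rewrite -HK; apply: leq_trans (max_card _) _; rewrite card_ord.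
  rewrite leqn0 => /eqP ->; rewrite big_ord0 big_pred0 //; by move=> [].
rewrite hss in hIs.
have [e inj] := @perm_idx _ _ hIs.
have hs : size Is = n.+1 by rewrite (perm_size hIs) size_iota.
set g := (fun i : 'I_n.+1 => (inord (nth 0%N Is i) : 'I_n.+1)) in e inj.
have -> : \sum_(i in K) l`_i = \sum_(i in K) (sort geR l)`_(g i).
  apply: eq_bigr => i _; rewrite {1}hl (nth_map 0%N) ?hs // /g e //.
have -> : \sum_(i in K) (sort geR l)`_(g i) = \sum_(j in g @: K) (sort geR l)`_j.
  by rewrite big_imset //; move=> i j _ _; apply: inj.
apply: (@top_sorted _ _ _ _ (sort_sorted geR_total l) hss).
by rewrite card_imset.
Qed.

Lemma top_att (n p : nat) (l : seq R) :
  size l = n -> (p <= n)%N -> exists K : {set 'I_n},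
  #|K| = p /\ \sum_(i < p) (sort geR l)`_i = \sum_(i in K) l`_i.
Proof.
move=> Hn pn.
have hp : perm_eq (sort geR l) l by rewrite perm_sort.
case/(perm_iotaP 0): hp => Is hIs hl.
case: n Hn pn hIs => [|n] Hn pn hIs.
  exists set0; move: pn; rewrite leqn0 => /eqP ->; rewrite cards0 big_ord0 big_set0 //.
rewrite Hn in hIs.
have [e inj] := @perm_idx _ _ hIs.
have hs : size Is = n.+1 by rewrite (perm_size hIs) size_iota.
set g := (fun i : 'I_n.+1 => (inord (nth 0%N Is i) : 'I_n.+1)) in e inj.
exists (g @: [set i : 'I_n.+1 | (i < p)%N]); split.
  by rewrite card_imset // cardP_lt.
rewrite big_imset /=; last by move=> i j _ _; apply: inj.
rewrite (big_ord_widen n.+1 (fun i => (sort geR l)`_i) pn).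
apply: eq_big => [i|i _]; first by rewrite inE.
by rewrite hl (nth_map 0%N) ?hs // e.
Qed.
Section Geo.
Variable d : nat.
Implicit Types u v w x y : pt d.

Lemma dotp_ge0 v : 0 <= dotp v v.
Proof. by rewrite /dotp; apply: sumr_ge0 => i _; rewrite -expr2 sqr_ge0. Qed.

Lemma enorm_ge0 v : 0 <= enorm v.
Proof. exact: sqrtr_ge0. Qed.

Lemma enorm_sq v : enorm v ^+ 2 = dotp v v.
Proof. by rewrite /enorm sqr_sqrtr // dotp_ge0. Qed.

Lemma dotp_exp w v a :
  dotp (w - a *: v) (w - a *: v) = dotp w w - 2 * a * dotp w v + a ^+ 2 * dotp v v.
Proof.
rewrite /dotp !mulr_sumr -sumrB -big_split /=; apply: eq_bigr => i _.
rewrite !mxE; ring.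
Qed.

Lemma dotp_add u v :
  dotp (u + v) (u + v) = dotp u u + 2 * dotp u v + dotp v v.
Proof.
rewrite /dotp !mulr_sumr -!big_split /=; apply: eq_bigr => i _.
rewrite !mxE; ring.
Qed.

Lemma dotp_scale a v : dotp (a *: v) (a *: v) = a ^+ 2 * dotp v v.
Proof.
rewrite /dotp !mulr_sumr; apply: eq_bigr => i _; rewrite !mxE; ring.
Qed.

Lemma dotpC u v : dotp u v = dotp v u.
Proof. by rewrite /dotp; apply: eq_bigr => i _; rewrite mulrC. Qed.

Lemma CS u v : dotp u v ^+ 2 <= dotp u u * dotp v v.
Proof.
have key : 2 * (dotp u u * dotp v v - dotp u v ^+ 2) =
  \sum_(i < d) \sum_(j < d) (u 0 i * v 0 j - u 0 j * v 0 i) ^+ 2.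
  have e1 : dotp u u * dotp v v = \sum_(i < d) \sum_(j < d) (u 0 i * u 0 i) * (v 0 j * v 0 j).
    by rewrite /dotp big_distrl /=; apply: eq_bigr => i _; rewrite big_distrr.
  have e2 : dotp u u * dotp v v = \sum_(i < d) \sum_(j < d) (u 0 j * u 0 j) * (v 0 i * v 0 i).
    by rewrite e1 exchange_big.
  have e3 : dotp u v ^+ 2 = \sum_(i < d) \sum_(j < d) (u 0 i * v 0 i) * (u 0 j * v 0 j).
    by rewrite expr2 /dotp big_distrl /=; apply: eq_bigr => i _; rewrite big_distrr.
  have -> : 2 * (dotp u u * dotp v v - dotp u v ^+ 2) =
     dotp u u * dotp v v + dotp u u * dotp v v - 2 * dotp u v ^+ 2 by ring.
  rewrite {1}e1 e2 e3 -big_split /= mulr_sumr -sumrB; apply: eq_bigr => i _.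
  rewrite -big_split mulr_sumr -sumrB /=; apply: eq_bigr => j _; ring.
have : 0 <= 2 * (dotp u u * dotp v v - dotp u v ^+ 2).
  rewrite key; apply: sumr_ge0 => i _; apply: sumr_ge0 => j _; exact: sqr_ge0.
rewrite pmulr_rge0 // subr_ge0 //.
Qed.

Lemma enormD u v : enorm (u + v) <= enorm u + enorm v.
Proof.
rewrite /enorm -(ger0_norm (addr_ge0 (sqrtr_ge0 (dotp u u)) (sqrtr_ge0 (dotp v v)))).
rewrite -sqrtr_sqr; apply: ler_wsqrtr.
rewrite dotp_add sqrrD !sqr_sqrtr ?dotp_ge0 // lerD2r lerD2l.
rewrite -[X in _ <= X]mulr_natl; apply: ler_wpM2l => //.
rewrite -sqrtrM ?dotp_ge0 //.
apply: le_trans (real_ler_norm _) _; first exact: num_real.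
rewrite -sqrtr_sqr; apply: ler_wsqrtr; exact: CS.
Qed.

Lemma enormZ a v : enorm (a *: v) = `|a| * enorm v.
Proof. by rewrite /enorm dotp_scale sqrtrM ?sqr_ge0 // sqrtr_sqr. Qed.

Lemma enormN v : enorm (- v) = enorm v.
Proof. by rewrite -scaleN1r enormZ normrN normr1 mul1r. Qed.

Lemma edistC x y : edist x y = edist y x.
Proof. by rewrite /edist -enormN opprB. Qed.

Lemma edist_tri x y z : edist x z <= edist x y + edist y z.
Proof.
rewrite /edist (_ : x - z = (x - y) + (y - z)); first exact: enormD.
by apply/rowP => j; rewrite !mxE; ring.
Qed.

Lemma proj_min (c u x : pt d) s : dotp (u - c) (u - c) = 1 ->
  dist_line (c, u) x <= edist x (c + s *: (u - c)).
Proof.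
move=> hu; rewrite /dist_line /proj_line /edist /=.
set t := dotp (x - c) (u - c).
rewrite (_ : x - (c + t *: (u - c)) = (x - c) - t *: (u - c)); last first.
  by apply/rowP => j; rewrite !mxE; ring.
rewrite (_ : x - (c + s *: (u - c)) = (x - c) - s *: (u - c)); last first.
  by apply/rowP => j; rewrite !mxE; ring.
rewrite /enorm; apply: ler_wsqrtr; rewrite !dotp_exp hu -/t.
have : 0 <= (s - t) ^+ 2 by exact: sqr_ge0.
lra.
Qed.

End Geo.

Lemma bigmin_prop (T : eqType) (F : T -> R) (idx : R) (s : seq T) :
  \big[Num.min/idx]_(c <- s) F c <= idx /\
  (forall c, c \in s -> \big[Num.min/idx]_(c <- s) F c <= F c) /\
  (\big[Num.min/idx]_(c <- s) F c = idx \/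
     exists2 c, c \in s & \big[Num.min/idx]_(c <- s) F c = F c).
Proof.
elim: s => [|a s [IH1 [IH2 IH3]]]; first by rewrite big_nil; split=> //; split=> //; left.
rewrite big_cons; split; first by rewrite ge_min IH1 orbT.
split.
  move=> c; rewrite inE => /orP[/eqP ->|hc]; first by rewrite ge_min lexx.
  by rewrite ge_min IH2 ?orbT.
case: (leP (F a) (\big[Num.min/idx]_(c <- s) F c)) => h.
  by right; exists a => //; rewrite inE eqxx.
case: IH3 => [H|[c hc H]]; first by left.
by right; exists c => //; rewrite inE hc orbT.
Qed.

Lemma distC_min d (C : seq (pt d)) x c : c \in C -> distC C x <= edist x c.
Proof. by move=> hc; have [_ [H _]] := bigmin_prop _ (edist x) (if C is c :: _ then edist x c else 0) C; apply: H. Qed.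

Lemma distC_ex d (C : seq (pt d)) x : C != [::] -> exists2 c, c \in C & distC C x = edist x c.
Proof.
case: C => [//|c0 C] _.
have [_ [_ [H|H]]] := bigmin_prop _ (edist x) (edist x c0) (c0 :: C); last exact: H.
by exists c0; rewrite ?inE ?eqxx.
Qed.

Lemma distC_lip d (C : seq (pt d)) a b : C != [::] -> distC C a <= distC C b + edist a b.
Proof.
move=> hC; have [c hc ->] := @distC_ex _ _ b hC.
apply: le_trans (@distC_min _ _ a _ hc) _.
by rewrite addrC; apply: edist_tri.
Qed.

Lemma distC_ge0 d (C : seq (pt d)) x : C != [::] -> 0 <= distC C x.
Proof. by move=> hC; have [c _ ->] := @distC_ex _ _ x hC; apply: enorm_ge0. Qed.

Lemma proj_bound d (C : seq (pt d)) (N : pt d -> seq (pt d)) eps (sel : pt d -> pt d * pt d) x :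
  0 < eps -> C != [::] -> (forall c, c \in C -> is_eps_net c eps (N c)) ->
  (sel x \in lines C N /\ (forall l, l \in lines C N -> dist_line (sel x) x <= dist_line l x)) ->
  edist (proj_line (sel x) x) x <= eps * distC C x.
Proof.
move=> he hC hN [_ hsel].
have [c hc hr] := @distC_ex _ _ x hC.
set r := distC C x in hr *.
have r0 : 0 <= r by rewrite hr; apply: enorm_ge0.
have [hd|hd] : (d = 0)%N \/ (0 < d)%N by case: (d) => [|n]; [left|right].
  have -> : edist (proj_line (sel x) x) x = 0.
    rewrite /edist /enorm /dotp; move: (proj_line _ _ - x); rewrite hd => v.
    by rewrite big_ord0 sqrtr0.
  by rewrite mulr_ge0 // ltW.
have [net1 net2] := hN c hc.
have unit1 : forall u, u \in N c -> dotp (u - c) (u - c) = 1.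
  move=> u hu; have := net1 u hu; rewrite /edist => h.
  by rewrite -enorm_sq h expr1n.
suff [u hu hb] : exists2 u, u \in N c & dist_line (c, u) x <= eps * r.
  rewrite edistC; apply: le_trans hb.
  change (dist_line (sel x) x <= dist_line (c, u) x).
  by apply: hsel; rewrite /lines; apply/allpairsPdep; exists c, u.
have [rp|rz] : 0 < r \/ r = 0.
    by move: r0; rewrite le_eqVlt => /orP[/eqP <-|->]; [right|left].
  set y := c + r^-1 *: (x - c).
  have hy : edist y c = 1.
    rewrite /edist (_ : y - c = r^-1 *: (x - c)); last first.
      by apply/rowP => j; rewrite !mxE; ring.
    rewrite enormZ -[enorm (x - c)]/(edist x c) -hr ger0_norm ?invr_ge0 ?ltW //.
    by rewrite mulVf // gt_eqF.
  have [u hu hyu] := net2 y hy.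
  exists u => //; apply: le_trans (@proj_min _ c u x r (unit1 u hu)) _.
  rewrite /edist (_ : x - (c + r *: (u - c)) = r *: (y - u)); last first.
    apply/rowP => j; rewrite !mxE; field; apply/eqP => h0; by move: rp; rewrite h0 ltxx.
  rewrite enormZ (ger0_norm r0) mulrC; apply: ler_wpM2r => //.
pose e0 : pt d := \row_j (if (val j == 0)%N then 1 else 0).
have he0 : dotp e0 e0 = 1.
  rewrite /dotp (bigD1 (Ordinal hd)) //= big1 ?addr0.
    by rewrite !mxE /= mulr1.
  move=> j hj; rewrite !mxE; case: eqP => [hj0|_]; last by rewrite mulr0.
  by move: hj; rewrite (_ : j = Ordinal hd) ?eqxx //; apply: val_inj.
have hy : edist (c + e0) c = 1.
  have e : c + e0 - c = e0 by apply/rowP => k; rewrite !mxE; ring.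
  by rewrite /edist /enorm e he0 sqrtr1.
have [u hu _] := net2 _ hy.
exists u => //; apply: le_trans (@proj_min _ c u x 0 (unit1 u hu)) _.
by rewrite scale0r addr0 -hr rz mulr0.
Qed.

Theorem lemma4p5 :
  exists beta : Rdefinitions.R, 0 < beta /\
  forall (d : nat) (X : seq (pt d)) (eps : Rdefinitions.R) (C : seq (pt d))
         (N : pt d -> seq (pt d)) (sel : pt d -> pt d * pt d)
         (C' : seq (pt d)) (p : nat),
    uniq X ->
    0 < eps < 1 ->
    uniq C -> C != [::] ->
    (forall c, c \in C -> is_eps_net c eps (N c)) ->
    (forall x, x \in X ->
       sel x \in lines C N /\
       (forall l, l \in lines C N -> dist_line (sel x) x <= dist_line l x)) ->
    C' != [::] ->
    (1 <= p <= size X)%N ->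
    `| costp p [seq proj_line (sel x) x | x <- X] C' - costp p X C' |
      <= beta * eps * costp p X C.
Proof.
exists 1; split; first exact: ltr01.
move=> d X eps C N sel C' p _ /andP[e0 _] _ hC hN hsel hC' /andP[_ pn].
set n := size X.
set X' := [seq proj_line (sel x) x | x <- X].
set a := map (distC C') X'.
set b := map (distC C') X.
set w := map (distC C) X.
have -> : costp p X' C' = \sum_(i < p) (sort geR a)`_i by [].
have -> : costp p X C' = \sum_(i < p) (sort geR b)`_i by [].
have -> : costp p X C = \sum_(i < p) (sort geR w)`_i by [].
have sa : size a = n by rewrite !size_map.
have sb : size b = n by rewrite !size_map.
have sw : size w = n by rewrite !size_map.
have pw : forall i : 'I_n, a`_i <= b`_i + eps * w`_i /\ b`_i <= a`_i + eps * w`_i.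
  move=> i; have hi : (i < size X)%N := ltn_ord i.
  rewrite /a /b /w /X' !(nth_map 0) ?size_map //.
  set x := X`_i.
  have hx : x \in X by apply: mem_nth.
  have hb := @proj_bound _ _ _ _ _ x e0 hC hN (hsel x hx).
  split.
    apply: le_trans (@distC_lip _ _ _ x hC') _; rewrite lerD2l //.
  apply: le_trans (@distC_lip _ _ _ (proj_line (sel x) x) hC') _; rewrite lerD2l edistC //.
have ineq : forall a b : seq R, size a = n -> size b = n ->
    (forall i : 'I_n, a`_i <= b`_i + eps * w`_i) ->
    \sum_(i < p) (sort geR a)`_i <= \sum_(i < p) (sort geR b)`_i + eps * \sum_(i < p) (sort geR w)`_i.
  move=> a1 b1 sa1 sb1 h.
  have [K [hK ->]] := @top_att _ _ a1 sa1 pn.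
  apply: le_trans (ler_sum _ (fun i _ => h i)) _.
  rewrite big_split /= -mulr_sumr; apply: lerD.
    exact: top_ge.
  by apply: ler_wpM2l; [exact: ltW | exact: top_ge].
have h1 := ineq a b sa sb (fun i => (pw i).1).
have h2 := ineq b a sb sa (fun i => (pw i).2).
rewrite mul1r ler_norml; apply/andP; split; lra.
Qed.
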